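(* Consider $n$ agents over a fixed undirected connected graph with symmetric nonnegative weights $a_{ij}$ and Laplacian $L$ with largest eigenvalue $\lambda_n$, and let $0<h<2/\lambda_n$. The states $x_i(t)\in\mathbb{R}^m$ evolve by $x_i(t+1)=x_i(t)+u_i(t)$ with $$y_i(t)=x_i(t)+h\sum_{j\in N_i}a_{ij}(x_j(t)-x_i(t)),\ \nabla_i(t)=\beta(t)\nabla g_i^+(y_i(t)),\ \xi_i(t)=y_i(t)-\nabla_i(t),$$ $$\varphi_i(t)=\alpha(t)\big(\xi_i(t)-P_{X_i}(\xi_i(t))\big),\ \phi_i(t)=-\nabla_i(t)-\varphi_i(t),\ u_i(t)=h\sum_{j\in N_i}a_{ij}(x_j(t)-x_i(t))+\phi_i(t),$$ for given real sequences $\alpha(t),\beta(t)$. If $\lim_{t\to\infty}\phi_i(t)=0$ for every $i$, then the agents reach consensus asymptotically, i.e. $\lim_{t\to\infty}\|x_i(t)-x_j(t)\|=0$ for all $i,j$.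
   Context: $g_i:\mathbb{R}^m\to\mathbb{R}$ convex continuous, $X_i\subset\mathbb{R}^m$ closed convex, $g_i^+=\max[g_i,0]$, $\nabla g_i^+(y)$ a subgradient of $g_i^+$ at $y$, $P_{X_i}$ Euclidean projection onto $X_i$. Laplacian $L=(l_{ij})$: $l_{ij}=-a_{ij}$ for $i\neq j$, $l_{ii}=\sum_j a_{ij}$. *)

(* Defs.v *)
From HB Require Import structures.
From mathcomp Require Import all_boot all_order all_algebra.
From mathcomp Require Import all_classical all_reals all_analysis.
Set Implicit Arguments. Unset Strict Implicit. Unset Printing Implicit Defensive.
Import Order.TTheory GRing.Theory Num.Theory.
Import numFieldNormedType.Exports.
Local Open Scope classical_set_scope.
Local Open Scope ring_scope.

Section Defs.
Variable R : realType.

Definition dotv m (x z : 'rV[R]_m) : R := \sum_(k < m) x 0 k * z 0 k.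
Definition enorm m (x : 'rV[R]_m) : R := Num.sqrt (dotv x x).

Definition convex_fun m (g : 'rV[R]_m -> R) : Prop :=
  forall (x z : 'rV[R]_m) (s : R), 0 <= s -> s <= 1 ->
    g (s *: x + (1 - s) *: z) <= s * g x + (1 - s) * g z.
Definition gplus m (g : 'rV[R]_m -> R) : 'rV[R]_m -> R := fun y => Num.max (g y) 0.

Definition is_subgradient m (f : 'rV[R]_m -> R) (y d : 'rV[R]_m) : Prop :=
  forall z : 'rV[R]_m, f y + dotv d (z - y) <= f z.

Definition is_proj m (X : set 'rV[R]_m) (P : 'rV[R]_m -> 'rV[R]_m) : Prop :=
  forall x : 'rV[R]_m, X (P x) /\ forall z, X z -> enorm (x - P x) <= enorm (x - z).

Definition laplacian n (a : 'M[R]_n) : 'M[R]_n :=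
  \matrix_(i, j) (if i == j then \sum_(k < n) a i k else - a i j).

Definition nbr n (a : 'M[R]_n) : rel 'I_n := fun i j => (j != i) && (0 < a i j).

Definition connected_graph n (a : 'M[R]_n) : Prop :=
  forall i j : 'I_n, connect (nbr a) i j.

Definition cons_term n m (a : 'M[R]_n) (h : R) (x : 'I_n -> 'rV[R]_m) (i : 'I_n)
  : 'rV[R]_m := h *: \sum_(j < n | nbr a i j) a i j *: (x j - x i).

Variables (n m : nat) (a : 'M[R]_n) (h : R) (P : 'I_n -> 'rV[R]_m -> 'rV[R]_m)
  (dg : 'I_n -> 'rV[R]_m -> 'rV[R]_m) (alpha beta : nat -> R)
  (x : nat -> 'I_n -> 'rV[R]_m).

Definition y_ t i := x t i + cons_term a h (x t) i.
Definition nabla_ t i := beta t *: dg i (y_ t i).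
Definition xi_ t i := y_ t i - nabla_ t i.
Definition varphi_ t i := alpha t *: (xi_ t i - P i (xi_ t i)).
Definition phi_ t i := - nabla_ t i - varphi_ t i.
Definition u_ t i := cons_term a h (x t) i + phi_ t i.

End Defs.

(* Main.v *)
Require Import Defs.
From HB Require Import structures.
From mathcomp Require Import all_boot all_order all_algebra.
From mathcomp Require Import all_classical all_reals all_analysis.
From mathcomp Require Import ring lra.
Import Order.TTheory GRing.Theory Num.Theory.
Import numFieldNormedType.Exports.
Local Open Scope classical_set_scope.
Local Open Scope ring_scope.

Section LA.
Context {R : realType}.
Implicit Types (k : nat).

Lemma dotvC {k} (u w : 'rV[R]_k) : dotv u w = dotv w u.
Proof. by apply: eq_bigr => i _; rewrite mulrC. Qed.
Lemma dotvDl {k} (u v w : 'rV[R]_k) : dotv (u + v) w = dotv u w + dotv v w.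
Proof. by rewrite /dotv -big_split; apply: eq_bigr => i _; rewrite mxE mulrDl. Qed.
Lemma dotvDr {k} (u v w : 'rV[R]_k) : dotv w (u + v) = dotv w u + dotv w v.
Proof. by rewrite dotvC dotvDl !(dotvC w). Qed.
Lemma dotvZl {k} c (u w : 'rV[R]_k) : dotv (c *: u) w = c * dotv u w.
Proof. by rewrite /dotv mulr_sumr; apply: eq_bigr => i _; rewrite mxE mulrA. Qed.
Lemma dotvZr {k} c (u w : 'rV[R]_k) : dotv w (c *: u) = c * dotv w u.
Proof. by rewrite dotvC dotvZl dotvC. Qed.
Lemma dotvNl {k} (u w : 'rV[R]_k) : dotv (- u) w = - dotv u w.
Proof. by rewrite -scaleN1r dotvZl mulN1r. Qed.
Lemma dotvNr {k} (u w : 'rV[R]_k) : dotv w (- u) = - dotv w u.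
Proof. by rewrite dotvC dotvNl dotvC. Qed.
Lemma dotvBl {k} (u v w : 'rV[R]_k) : dotv (u - v) w = dotv u w - dotv v w.
Proof. by rewrite dotvDl dotvNl. Qed.
Lemma dotvBr {k} (u v w : 'rV[R]_k) : dotv w (u - v) = dotv w u - dotv w v.
Proof. by rewrite dotvDr dotvNr. Qed.
Lemma dotv0l {k} (w : 'rV[R]_k) : dotv 0 w = 0.
Proof. by rewrite /dotv big1 // => i _; rewrite mxE mul0r. Qed.
Lemma dotv_ge0 {k} (u : 'rV[R]_k) : 0 <= dotv u u.
Proof. by apply: sumr_ge0 => i _; rewrite -expr2 sqr_ge0. Qed.
Lemma dotv_eq0 {k} (u : 'rV[R]_k) : dotv u u = 0 -> u = 0.
Proof.
move=> H; apply/rowP => i; rewrite mxE.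
apply/eqP; rewrite -sqrf_eq0 expr2; apply/eqP.
by apply: (psumr_eq0P _ H) => // j _; rewrite -expr2 sqr_ge0.
Qed.

Lemma dotv_sym {k} (S : 'M[R]_k) (u w : 'rV[R]_k) : S^T = S ->
  dotv (u *m S) w = dotv u (w *m S).
Proof.
move=> hS; rewrite /dotv.
under eq_bigr do rewrite mxE mulr_suml.
rewrite exchange_big /=; apply: eq_bigr => i _.
rewrite mxE mulr_sumr; apply: eq_bigr => j _.
have e : S i j = S j i by rewrite -{1}hS mxE.
rewrite e; ring.
Qed.

Lemma cont_sum {T : topologicalType} {I : finType} (F : I -> T -> R) :
  (forall i, continuous (F i)) -> continuous (fun x => \sum_i F i x).
Proof.
move=> H.
exact: (@continuous_big _ _ +%R 0 xpredT add_continuous T _ F (fun i _ => H i)).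
Qed.

Lemma cont_mul {T : topologicalType} (f g : T -> R) :
  continuous f -> continuous g -> continuous (fun x => f x * g x).
Proof. by move=> cf cg x; exact: continuousM (cf x) (cg x). Qed.

Lemma cont_coord {k} (j : 'I_k) : continuous (fun v : 'rV[R]_k => v 0 j).
Proof. exact: (@coord_continuous R 1 k 0 j). Qed.

Lemma sq_le_dotv {k} (v : 'rV[R]_k) j : v 0 j ^+ 2 <= dotv v v.
Proof.
rewrite /dotv (bigD1 j) //= -expr2 lerDl.
by apply: sumr_ge0 => i _; rewrite -expr2 sqr_ge0.
Qed.

Lemma scal_lemma (e F : R) : 0 <= e -> 0 <= F ->
  (forall t, 0 <= - 2 * t * e + t ^+ 2 * F) -> e = 0.
Proof.
move=> e0 F0 H; have := H (e / (F + 1)).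
set u := e / (F + 1).
have F1 : 0 < F + 1 by lra.
have u0 : 0 <= u by rewrite /u divr_ge0 // ltW.
have uF : u * F <= e.
  rewrite /u mulrAC ler_pdivrMr // ; nra.
move=> h; have ue : u * e <= 0 by nra.
have iF : 0 < (F + 1)^-1 by rewrite invr_gt0.
have : e * e * (F + 1)^-1 <= 0 by move: ue; rewrite /u; congr (_ <= _); ring.
move=> hh; have ee : e * e <= 0 by nra.
by apply/eqP; rewrite eq_le e0 andbT; nra.
Qed.

Lemma sphere_bounded {k} : bounded_set [set v : 'rV[R]_k | dotv v v = 1].
Proof.
rewrite /= /bounded_near; near=> M => v Av /=.
    change (mx_norm v <= M); rewrite mx_normrE; apply: bigmax_le => [|ij _].
      by near: M; apply: nbhs_pinfty_ge; rewrite num_real.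
    have -> : ij.1 = 0 by rewrite (ord1 ij.1).
    have h1 := sq_le_dotv v ij.2; rewrite Av in h1.
    have h2 : `|v 0 ij.2| ^+ 2 <= 1 by rewrite real_normK ?num_real.
    have h3 : `|v 0 ij.2| <= 1 by have := normr_ge0 (v 0 ij.2); nra.
    apply: (le_trans h3); near: M; apply: nbhs_pinfty_ge; by rewrite num_real.
Unshelve. all: end_near. Qed.

Lemma rayleigh {k} (S : 'M[R]_k.+1) : S^T = S ->
  exists q (v : 'rV[R]_k.+1),
    [/\ v != 0, v *m S = q *: v & forall z, dotv (z *m S) z <= q * dotv z z].
Proof.
move=> hS.
pose A := [set v : 'rV[R]_k.+1 | dotv v v = 1].
pose f := fun v : 'rV[R]_k.+1 => dotv (v *m S) v.
have cdot : continuous (fun v : 'rV[R]_k.+1 => dotv v v).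
  by apply: cont_sum => j; apply: cont_mul; apply: cont_coord.
have cf : continuous f.
  have -> : f = fun v => \sum_j (\sum_i v 0 i * S i j) * v 0 j.
    by apply: funext => v; rewrite /f /dotv; apply: eq_bigr => j _; rewrite mxE.
  apply: cont_sum => j; apply: cont_mul; last exact: cont_coord.
  apply: cont_sum => i; apply: cont_mul; first exact: cont_coord.
  exact: cst_continuous.
have A0 : A !=set0.
  exists (\row_j (j == ord0)%:R); rewrite /A /= /dotv (bigD1 ord0) //= big1.
    by rewrite !mxE eqxx mulr1 addr0.
  by move=> j /negPf hj; rewrite !mxE hj mulr0.
have cA : compact A.
  apply: bounded_closed_compact.
    exact: sphere_bounded.
  suff : closed ((fun v : 'rV[R]_k.+1 => dotv v v) @^-1` [set x : R | x = 1]) by [].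
  by move: cdot => /continuous_closedP; apply; apply: closed_eq.
have [c cA' cmax] := EVT_max_rV A0 cA (continuous_subspaceT cf).
have Ac : dotv c c = 1 by move: cA'; rewrite inE.
set q := f c.
have ray : forall z, f z <= q * dotv z z.
  move=> z; have [->|z0] := eqVneq z 0.
    by rewrite /f mul0mx !dotv0l mulr0.
  set d := dotv z z.
  have d0 : 0 < d.
    rewrite lt_def dotv_ge0 andbT; apply/eqP => /dotv_eq0 h; by rewrite h eqxx in z0.
  set s := (Num.sqrt d)^-1.
  have s2 : s ^+ 2 = d^-1 by rewrite /s exprVn sqr_sqrtr // ltW.
  have : f (s *: z) <= q by apply: cmax; rewrite inE /A /= dotvZl dotvZr mulrA -expr2 s2 mulVf // gt_eqF.
  rewrite /f -scalemxAl dotvZl dotvZr mulrA -expr2 s2 -/(f z) => h.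
  by rewrite -ler_pdivrMr // mulrC.
exists q, c; split.
- by apply/eqP => c0; move: Ac; rewrite c0 dotv0l => /eqP; rewrite eq_sym oner_eq0.
- have [w cSw] : {w | c *m S = q *: c + w}.
    by exists (c *m S - q *: c); rewrite addrC subrK.
  suff w0 : w = 0 by rewrite cSw w0 addr0.
  apply: dotv_eq0; apply: (@scal_lemma _ (q * dotv w w - f w) (dotv_ge0 w)).
    by rewrite subr_ge0 ray.
  move=> t; have := ray (c + t *: w); rewrite -subr_ge0.
  have wSc : dotv (w *m S) c = dotv (c *m S) w by rewrite dotv_sym // dotvC.
  have cSw' : dotv (c *m S) w = q * dotv c w + dotv w w.
    by rewrite cSw dotvDl dotvZl.
  rewrite /f mulmxDl -scalemxAl !(dotvDl, dotvDr, dotvZl, dotvZr) wSc.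
  rewrite -/(f c) -/q -/(f w) Ac cSw' (dotvC w c).
  by congr (0 <= _); ring.
- exact: ray.
Qed.

Definition sig {k} (u : 'rV[R]_k) := \sum_i u 0 i.
Lemma sigD {k} (u v : 'rV[R]_k) : sig (u + v) = sig u + sig v.
Proof. by rewrite /sig -big_split; apply: eq_bigr => i _; rewrite mxE. Qed.
Lemma sigZ {k} c (u : 'rV[R]_k) : sig (c *: u) = c * sig u.
Proof. by rewrite /sig mulr_sumr; apply: eq_bigr => i _; rewrite mxE. Qed.
Lemma sigN {k} (u : 'rV[R]_k) : sig (- u) = - sig u.
Proof. by rewrite -scaleN1r sigZ mulN1r. Qed.
Lemma sigB {k} (u v : 'rV[R]_k) : sig (u - v) = sig u - sig v.
Proof. by rewrite sigD sigN. Qed.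

Lemma contraction {N} (Lt : 'M[R]_N.+1) h lam :
  Lt^T = Lt -> (forall u, 0 <= dotv (u *m Lt) u) ->
  (forall u, dotv (u *m Lt) u = 0 -> forall i j, u 0 i = u 0 j) ->
  (forall u, sig (u *m Lt) = 0) ->
  (forall z, dotv (z *m Lt) z <= lam * dotv z z) -> 0 < h -> h * lam < 2 ->
  exists q, q < 1 /\ forall e, sig e = 0 ->
    dotv (e *m (1%:M - h *: Lt)) (e *m (1%:M - h *: Lt)) <= q * dotv e e.
Proof.
move=> hLt psd ker sigL bnd h0 hlam.
set W := 1%:M - h *: Lt.
pose Pi : 'M[R]_N.+1 := const_mx (N.+1%:R^-1).
have WT : W^T = W by rewrite /W linearB /= linearZ /= trmx1 hLt.
have sigW : forall u : 'rV[R]_N.+1, sig (u *m W) = sig u.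
  by move=> u; rewrite /W mulmxBr mulmx1 -scalemxAr sigB sigZ sigL mulr0 subr0.
have uW : forall u : 'rV[R]_N.+1, u *m W = u - h *: (u *m Lt).
  by move=> u; rewrite /W mulmxBr mulmx1 -scalemxAr.
have Pi0 : forall u : 'rV[R]_N.+1, sig u = 0 -> u *m Pi = 0.
  move=> u su; apply/rowP => j; rewrite !mxE.
  under eq_bigr do rewrite mxE; rewrite -mulr_suml.
  by move: su; rewrite /sig => ->; rewrite mul0r.
have sigPi : forall u : 'rV[R]_N.+1, sig (u *m Pi) = sig u.
  move=> u; rewrite /sig; under eq_bigr do (rewrite mxE; under eq_bigr do rewrite mxE).
  rewrite sumr_const card_ord -mulr_suml -[_ *+ N.+1]mulr_natr divfK // pnatr_eq0.
pose S := W *m W - Pi.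
have ST : S^T = S by rewrite /S linearB /= trmx_mul WT trmx_const.
have [q [v [v0 vS qb]]] := rayleigh _ ST.
exists q; split; last first.
  move=> e se; rewrite dotv_sym // -mulmxA.
  have -> : e *m (W *m W) = e *m S.
  by rewrite /S (mulmxBr e) (Pi0 e se) subr0.
  by rewrite dotvC; exact: qb.
rewrite ltNge; apply/negP => q1.
have v2 : 0 < dotv v v.
  by rewrite lt_def dotv_ge0 andbT; apply/eqP => /dotv_eq0 h'; rewrite h' eqxx in v0.
have sv : sig v = 0.
  have : sig (v *m S) = 0 by rewrite /S (mulmxBr v) sigB sigPi mulmxA !sigW subrr.
  by rewrite vS sigZ => /eqP; rewrite mulf_eq0 => /orP [/eqP q0|/eqP //]; move: q1; rewrite q0 ler10.
have vWW : v *m W *m W = q *: v.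
  rewrite -vS -mulmxA.
  have -> : v *m S = v *m (W *m W) - v *m Pi by rewrite /S (mulmxBr v).
  by rewrite (Pi0 v sv) subr0.
set s := Num.sqrt q.
have s2 : s ^+ 2 = q by rewrite sqr_sqrtr // (le_trans ler01).
have s1 : 1 <= s by have := sqrtr_ge0 q; rewrite -/s; nra.
set u := v *m W + s *: v.
have uWs : u *m W = s *: u.
  rewrite /u mulmxDl vWW -scalemxAl scalerDr scalerA -expr2 s2 addrC //.
have [u0|un0] := eqVneq u 0.
  have : h *: (v *m Lt) = (1 + s) *: v.
    move: u0; rewrite /u uW => /eqP; rewrite addrAC subr_eq0 => /eqP <-.
    by rewrite scalerDl scale1r.
  move=> /(congr1 (fun z => dotv z v)); rewrite !dotvZl => e1.
  have : (1 + s) * dotv v v <= h * lam * dotv v v.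
    by rewrite -e1 -mulrA ler_pM2l // bnd.
  rewrite ler_pM2r //; lra.
have : h *: (u *m Lt) = (1 - s) *: u.
  by rewrite scalerBl scale1r -uWs uW opprB addrC subrK.
move=> /(congr1 (fun z => dotv z u)); rewrite !dotvZl => e1.
have u2 : 0 <= dotv u u by exact: dotv_ge0.
have hu : dotv (u *m Lt) u = 0.
  have := psd u; move: e1; set d := dotv (u *m Lt) u => e1 d0.
  by apply/eqP; rewrite eq_le d0 andbT; nra.
have cst := ker _ hu.
have su : sig u = 0 by rewrite /u sigD sigW sigZ sv mulr0 addr0.
have : u = 0.
  apply/rowP => j; rewrite [RHS]mxE; move: su; rewrite /sig.
  under eq_bigr do rewrite (cst _ j).
  rewrite sumr_const card_ord => /eqP; rewrite mulrn_eq0 /= => /eqP //.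
by move=> u0; move: un0; rewrite u0 eqxx.
Qed.

Section Lap.
Context {n : nat} (a : 'M[R]_n).
Hypothesis asym : forall i j, a i j = a j i.
Hypothesis apos : forall i j, 0 <= a i j.

Definition Lt : 'M[R]_n := \matrix_(i, j) ((i == j)%:R * \sum_l a j l - a i j).

Lemma LtE (u : 'rV[R]_n) j : (u *m Lt) 0 j = \sum_i a i j * (u 0 j - u 0 i).
Proof.
rewrite mxE; under eq_bigr do rewrite mxE mulrBr mulrA.
rewrite sumrB; under [X in _ = X]eq_bigr do rewrite mulrBr.
rewrite sumrB; congr (_ - _); last by apply: eq_bigr => i _; rewrite mulrC.
set S := \sum_l a j l.
rewrite (bigD1 j) //= big1 ?addr0; last first.
  by move=> i /negPf ->; rewrite mulr0 mul0r.
rewrite eqxx mulr1 mulrC /S mulr_suml; apply: eq_bigr => i _; by rewrite asym.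
Qed.

Lemma LtT : Lt^T = Lt.
Proof.
apply/matrixP => i j; rewrite !mxE eq_sym.
case: (eqVneq i j) => [->|ne]; first by [].
by rewrite (asym i j) !mul0r.
Qed.

Lemma lap_Lt : laplacian a = Lt + diag_mx (\row_i a i i).
Proof.
apply/matrixP => i j; rewrite !mxE.
case: (eqVneq i j) => [->|ne]; first by rewrite ?eqxx mulr1n mul1r subrK.
by rewrite mulr0n mul0r sub0r addr0.
Qed.

Lemma dot_lap (z : 'rV[R]_n) :
  dotv (z *m laplacian a) z = dotv (z *m Lt) z + \sum_i a i i * z 0 i ^+ 2.
Proof.
rewrite lap_Lt mulmxDr dotvDl mul_mx_diag; congr (_ + _).
by apply: eq_bigr => i _; rewrite !mxE; ring.
Qed.

Lemma dot_Lt_le_lap (z : 'rV[R]_n) : dotv (z *m Lt) z <= dotv (z *m laplacian a) z.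
Proof.
rewrite dot_lap lerDl; apply: sumr_ge0 => i _; apply: mulr_ge0 => //.
exact: sqr_ge0.
Qed.

Lemma dot_Lt2 (u : 'rV[R]_n) :
  2 * dotv (u *m Lt) u = \sum_j \sum_i a i j * (u 0 j - u 0 i) ^+ 2.
Proof.
have T1 : dotv (u *m Lt) u = \sum_j \sum_i a i j * (u 0 j - u 0 i) * u 0 j.
  by apply: eq_bigr => j _; rewrite LtE mulr_suml.
have T2 : dotv (u *m Lt) u = \sum_j \sum_i a i j * (u 0 i - u 0 j) * u 0 i.
  rewrite T1 exchange_big /=; apply: eq_bigr => j _; apply: eq_bigr => i _.
  by rewrite asym.
rewrite mulr2n mulrDl mul1r {1}T1 T2 -big_split; apply: eq_bigr => j _.
rewrite -big_split; apply: eq_bigr => i _ /=; ring.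
Qed.

Lemma Lt_psd (u : 'rV[R]_n) : 0 <= dotv (u *m Lt) u.
Proof.
have : 0 <= 2 * dotv (u *m Lt) u.
  rewrite dot_Lt2; apply: sumr_ge0 => j _; apply: sumr_ge0 => i _.
  by apply: mulr_ge0 => //; exact: sqr_ge0.
by rewrite pmulr_rge0.
Qed.

Lemma Lt_ker (u : 'rV[R]_n) : connected_graph a ->
  dotv (u *m Lt) u = 0 -> forall i j, u 0 i = u 0 j.
Proof.
move=> conn H.
have H2 : \sum_j \sum_i a i j * (u 0 j - u 0 i) ^+ 2 = 0 by rewrite -dot_Lt2 H mulr0.
have edge : forall i j, nbr a i j -> u 0 i = u 0 j.
  move=> i j /andP [_ aij].
  have h1 : \sum_i0 a i0 j * (u 0 j - u 0 i0) ^+ 2 = 0.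
    apply: (psumr_eq0P _ H2) => // l _.
    by apply: sumr_ge0 => i0 _; apply: mulr_ge0 => //; exact: sqr_ge0.
  have : a i j * (u 0 j - u 0 i) ^+ 2 = 0.
    apply: (psumr_eq0P _ h1) => // l _.
    by apply: mulr_ge0 => //; exact: sqr_ge0.
  move/eqP; rewrite mulf_eq0 (gt_eqF aij) /= sqrf_eq0 subr_eq0 => /eqP.
  by move=> ->.
move=> i j; have /connectP [p pth ->] := conn i j.
elim: p i pth => [|y p IH] i //= /andP [nij pth].
by rewrite (edge _ _ nij) IH.
Qed.

Lemma sig_Lt (u : 'rV[R]_n) : sig (u *m Lt) = 0.
Proof.
have T1 : sig (u *m Lt) = \sum_j \sum_i a i j * (u 0 j - u 0 i).
  by apply: eq_bigr => j _; rewrite LtE.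
have T2 : sig (u *m Lt) = - \sum_j \sum_i a i j * (u 0 j - u 0 i).
  rewrite T1 [LHS]exchange_big /= -sumrN; apply: eq_bigr => j _.
  rewrite -[RHS]sumrN; apply: eq_bigr => i _; rewrite asym; ring.
have : sig (u *m Lt) + sig (u *m Lt) = 0 by rewrite {1}T1 T2 subrr.
lra.
Qed.

Lemma one_Lt : (const_mx 1 : 'rV[R]_n) *m Lt = 0.
Proof.
apply/rowP => j; rewrite LtE [RHS]mxE big1 // => i _; rewrite !mxE subrr mulr0.
done.
Qed.

Lemma nbr_sum (w : 'I_n -> R) l :
  \sum_(j | nbr a l j) a l j * (w j - w l) = - \sum_i a i l * (w l - w i).
Proof.
rewrite big_mkcond /= -sumrN; apply: eq_bigr => i _.
rewrite /nbr; case: (eqVneq i l) => [->|ne] /=.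
  by rewrite subrr mulr0 oppr0.
case: ifP => [_|]; first by rewrite asym; ring.
move/negbT; rewrite -leNgt => al.
have -> : a i l = 0 by apply/eqP; rewrite asym eq_le al apos.
by rewrite mul0r oppr0.
Qed.

End Lap.

Lemma contract_cvg (E G : nat -> R) r : 0 <= r -> r < 1 ->
  (forall t, 0 <= E t) -> (forall t, E t.+1 <= r * E t + G t) ->
  G t @[t --> \oo] --> 0 -> E t @[t --> \oo] --> 0.
Proof.
move=> r0 r1 E0 rec hG; apply/cvgr0Pnorm_le => eps eps0.
have e1 : 0 < eps * (1 - r) / 2 by apply: divr_gt0 => //; apply: mulr_gt0; lra.
have [N _ HN] := (cvgr0Pnorm_le _).1 hG _ e1.
pose M := Num.max (E N - eps / 2) 0.
have M0 : 0 <= M by rewrite /M le_max lexx orbT.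
have geo : forall k, E (N + k)%N - eps / 2 <= r ^+ k * M.
  elim => [|k IH]; first by rewrite addn0 expr0 mul1r /M le_max lexx.
  have hGk : `|G (N + k)%N| <= eps * (1 - r) / 2 by apply: HN; rewrite /= leq_addr.
  have g1 : G (N + k)%N <= eps * (1 - r) / 2 by apply: le_trans (ler_norm _) hGk.
  rewrite addnS exprS -mulrA.
  have := rec (N + k)%N; move: IH; set Ek := E (N + k)%N; set Gk := G (N + k)%N.
  move=> IH h; have : r * (Ek - eps / 2) <= r * (r ^+ k * M) by rewrite ler_wpM2l.
  move=> h2; clear -h2 h g1 r0; rewrite -/Gk in g1; nra.
have rcv : (GRing.exp r : R ^nat) @ \oo --> 0 by apply: cvg_expr; rewrite ger0_norm.
have d0 : 0 < eps / 2 / (M + 1) by apply: divr_gt0; lra.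
have [K _ HK] := (cvgr0Pnorm_le _).1 rcv _ d0.
exists (N + K)%N => // t /= Ht.
have tN : t = (N + (t - N))%N by rewrite subnKC // (leq_trans (leq_addr K N)) // addnC.
have rk : `|r ^+ (t - N)| <= eps / 2 / (M + 1).
  by apply: HK; rewrite /= leq_subRL ?(leq_trans (leq_addr K N)) // addnC.
rewrite ger0_norm // in rk; last exact: exprn_ge0.
have := geo (t - N)%N; rewrite -tN => g.
rewrite ger0_norm //.
have : r ^+ (t - N) * M <= eps / 2.
  have : r ^+ (t - N) * (M + 1) <= eps / 2 by rewrite -ler_pdivlMr //; lra.
  have := exprn_ge0 (t - N) r0; nra.
lra.
Qed.

Lemma young {k} (p w : 'rV[R]_k) d : 0 < d ->
  dotv (p + w) (p + w) <= (1 + d) * dotv p p + (1 + d^-1) * dotv w w.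
Proof.
move=> d0; rewrite !(dotvDl, dotvDr) (dotvC w p).
suff : 2 * dotv p w <= d * dotv p p + d^-1 * dotv w w by lra.
rewrite /dotv !mulr_sumr -big_split /=; apply: ler_sum => i _.
have : 0 <= d^-1 * (d * p 0 i - w 0 i) ^+ 2.
  by apply: mulr_ge0; [rewrite invr_ge0 ltW | exact: sqr_ge0].
have -> : d^-1 * (d * p 0 i - w 0 i) ^+ 2 =
  d * (p 0 i * p 0 i) + d^-1 * (w 0 i * w 0 i) - 2 * (p 0 i * w 0 i).
  by field; rewrite gt_eqF.
lra.
Qed.

Lemma sig_one {k} : sig (const_mx 1 : 'rV[R]_k) = k%:R.
Proof. by rewrite /sig; under eq_bigr do rewrite mxE; rewrite sumr_const card_ord. Qed.

Lemma sig_center {k} (w : 'rV[R]_k.+1) :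
  sig (w - (sig w / k.+1%:R) *: const_mx 1) = 0.
Proof. by rewrite sigB sigZ sig_one divfK ?subrr // pnatr_eq0. Qed.

Lemma center_le {k} (w : 'rV[R]_k.+1) :
  dotv (w - (sig w / k.+1%:R) *: const_mx 1) (w - (sig w / k.+1%:R) *: const_mx 1)
  <= dotv w w.
Proof.
have d1 : dotv w (const_mx 1) = sig w.
  by rewrite /dotv /sig; apply: eq_bigr => i _; rewrite mxE mulr1.
have d2 : dotv (const_mx 1 : 'rV[R]_k.+1) (const_mx 1) = k.+1%:R.
  by rewrite /dotv -sig_one; apply: eq_bigr => i _; rewrite !mxE mulr1.
rewrite !(dotvBl, dotvBr, dotvZl, dotvZr) d1 (dotvC _ w) d1 d2.
set s := sig w; set N1 := k.+1%:R.
have N0 : 0 < N1 by rewrite ltr0n.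
have e : s / N1 * (s / N1 * N1) = s / N1 * s by rewrite divfK // gt_eqF.
have : 0 <= s / N1 * s by rewrite mulrAC; apply: divr_ge0; [rewrite -expr2 sqr_ge0 | exact: ltW].
rewrite divfK ?gt_eqF // subrr mulr0 subr0 => hh.
by rewrite gerBl.
Qed.

Lemma cvg_sum0 {I : finType} (F : I -> nat -> R) :
  (forall i, F i t @[t --> \oo] --> 0) -> (\sum_i F i t) @[t --> \oo] --> 0.
Proof.
move=> H.
have := @cvg_big R I +%R 0 xpredT add_continuous nat \oo (index_enum I) F (fun=> 0).
by rewrite big1 //; apply.
Qed.
End LA.
Arguments LtE {R n a}. Arguments LtT {R n a}. Arguments Lt_psd {R n a}.
Arguments Lt_ker {R n a}. Arguments sig_Lt {R n a}. Arguments one_Lt {R n a}.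
Arguments nbr_sum {R n a}. Arguments dot_Lt_le_lap {R n a}. Arguments lap_Lt {R n a}.

Theorem proposition3 (R : realType) (n m : nat) (a : 'M[R]_n)
  (g : 'I_n -> 'rV[R]_m -> R) (X : 'I_n -> set 'rV[R]_m)
  (P : 'I_n -> 'rV[R]_m -> 'rV[R]_m) (dg : 'I_n -> 'rV[R]_m -> 'rV[R]_m)
  (lam h : R) (alpha beta : nat -> R) (x : nat -> 'I_n -> 'rV[R]_m) :
  (forall i j, a i j = a j i) ->
  (forall i j, 0 <= a i j) ->
  connected_graph a ->
  (forall i, convex_fun (g i) /\ continuous (g i)) ->
  (forall i, closed (X i) /\ convex_set (X i)) ->
  (forall i, is_proj (X i) (P i)) ->
  (forall i y, is_subgradient (gplus (g i)) y (dg i y)) ->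
  eigenvalue (laplacian a) lam ->
  (forall mu, eigenvalue (laplacian a) mu -> mu <= lam) ->
  0 < h -> h < 2 / lam ->
  (forall t i, x t.+1 i = x t i + u_ a h P dg alpha beta x t i) ->
  (forall i, phi_ a h P dg alpha beta x t i @[t --> \oo] --> (0 : 'rV[R]_m)) ->
  forall i j, enorm (x t i - x t j) @[t --> \oo] --> (0 : R).
Proof.
move=> Hsym Hpos Hconn _ _ _ _ Heig Hmax h0 hlt Hx Hphi.
destruct n as [|N]; first by case.
move=> i j.
have lam0 : 0 < lam.
  rewrite ltNge; apply/negP => l0.
  have : 2 / lam <= 0 by apply: mulr_ge0_le0 => //; rewrite invr_le0.
  lra.
have hl : h * lam < 2 by rewrite -ltr_pdivlMr.
set L := Lt a.
have B : forall z : 'rV[R]_N.+1, dotv (z *m L) z <= lam * dotv z z.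
  have LT : (laplacian a)^T = laplacian a.
    by rewrite lap_Lt linearD /= (LtT Hsym) tr_diag_mx.
  have [q0 [v [v0 vL qb]]] := rayleigh _ LT.
  have q0l : q0 <= lam by apply: Hmax; apply/eigenvalueP; exists v.
  move=> z; apply: le_trans (dot_Lt_le_lap Hpos z) _.
  apply: le_trans (qb z) _; apply: ler_wpM2r => //; exact: dotv_ge0.
have [q [q1 Hc]] := @contraction R N L h lam (LtT Hsym) (Lt_psd Hsym Hpos)
  (fun u => Lt_ker Hsym Hpos u Hconn) (sig_Lt Hsym) B h0 hl.
set W := 1%:M - h *: L.
have Hx' : forall t i, x t.+1 i = x t i + cons_term a h (x t) i + phi_ a h P dg alpha beta x t i.
  by move=> t l; rewrite Hx /u_ addrA.
move: (phi_ a h P dg alpha beta x) Hx' Hphi => phi {}Hx Hphi.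
pose z (k : 'I_m) t : 'rV[R]_N.+1 := \row_l (x t l) 0 k.
pose f (k : 'I_m) t : 'rV[R]_N.+1 := \row_l (phi t l) 0 k.
have uW : forall u : 'rV[R]_N.+1, u *m W = u - h *: (u *m L).
  by move=> u; rewrite /W mulmxBr mulmx1 -scalemxAr.
have zrec : forall k t, z k t.+1 = z k t *m W + f k t.
  move=> k t; rewrite uW; apply/rowP => l.
  rewrite 5![in RHS]mxE /L (LtE Hsym) !mxE Hx /cons_term !mxE summxE.
  under eq_bigr do rewrite !mxE.
  under [in RHS]eq_bigr do rewrite !mxE.
  rewrite (nbr_sum Hsym Hpos (fun j => x t j 0 k)).
  ring.
pose one : 'rV[R]_N.+1 := const_mx 1.
pose cen (w : 'rV[R]_N.+1) := w - (sig w / N.+1%:R) *: one.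
pose e k t := cen (z k t).
pose gg k t := cen (f k t).
have oneW : one *m W = one by rewrite uW /L (one_Lt Hsym) scaler0 subr0.
have sigW : forall u, sig (u *m W) = sig u.
  by move=> u; rewrite uW sigB sigZ (sig_Lt Hsym) mulr0 subr0.
have erec : forall k t, e k t.+1 = e k t *m W + gg k t.
  move=> k t; rewrite /e /gg /cen zrec mulmxBl -scalemxAl oneW sigD sigW.
  rewrite mulrDl scalerDl; set zW := z k t *m W; set c1 := sig (z k t) / _; set c2 := sig (f k t) / _.
  by rewrite opprD !addrA; congr (_ + _); rewrite addrAC.
have sige : forall k t, sig (e k t) = 0 by move=> k t; apply: sig_center.
pose q' := Num.max q 0.
have q'0 : 0 <= q' by rewrite /q' le_max lexx orbT.
have q'1 : q' < 1 by rewrite /q' gt_max q1 ltr01.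
have qq' : q <= q' by rewrite /q' le_max lexx.
pose d := (1 - q') / 2.
have d0 : 0 < d by rewrite /d; lra.
pose r := (1 + d) * q'.
have r0 : 0 <= r by rewrite /r; apply: mulr_ge0 => //; lra.
have r1 : r < 1 by rewrite /r /d; nra.
pose C := 1 + d^-1.
have C0 : 0 <= C by rewrite /C; have := invr_gt0 d; rewrite d0 => /= hd; lra.
pose E t := \sum_k dotv (e k t) (e k t).
pose Phi t := \sum_k dotv (f k t) (f k t).
have Erec : forall t, E t.+1 <= r * E t + C * Phi t.
  move=> t; rewrite /E /Phi !mulr_sumr -big_split; apply: ler_sum => k _ /=.
  rewrite erec; apply: le_trans (young _ _ d d0) _; apply: lerD.
    rewrite /r -mulrA; apply: ler_wpM2l; first lra.
    apply: le_trans (Hc _ (sige k t)) _; apply: ler_wpM2r => //; exact: dotv_ge0.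
  apply: ler_wpM2l => //; exact: center_le.
have E0 : forall t, 0 <= E t by move=> t; apply: sumr_ge0 => k _; exact: dotv_ge0.
have coord : forall l k, phi t l 0 k @[t --> \oo] --> 0.
  move=> l k; have := cvg_comp _ _ (Hphi l) (@cont_coord R m k 0).
  by rewrite mxE.
have Phi0 : Phi t @[t --> \oo] --> 0.
  apply: cvg_sum0 => k; apply: cvg_sum0 => l.
  have := cvgM (coord l k) (coord l k); rewrite mulr0.
  move=> /(_ _) H.
  suff -> : (fun t => f k t 0 l * f k t 0 l) = ((fun t => phi t l 0 k) \* (fun t => phi t l 0 k)) by exact: H.
  by apply: funext => t; rewrite /f !mxE.
have CPhi0 : C * Phi t @[t --> \oo] --> 0.
  have := cvgMr_tmp (b:=C) Phi0; rewrite mul0r.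
  move=> H; suff -> : (fun t => C * Phi t) = (fun t => Phi t * C) by exact: H.
  by apply: funext => t; rewrite mulrC.
have EC := @contract_cvg R E (fun t => C * Phi t) r r0 r1 E0 Erec CPhi0.
apply/cvgr0Pnorm_le => eps eps0.
have e4 : 0 < eps ^+ 2 / 4 by apply: divr_gt0 => //; exact: exprn_gt0.
apply: filterS ((cvgr0Pnorm_le _).1 EC _ e4) => t Ht.
set D := x t i - x t j.
have Dk : forall k, D 0 k = e k t 0 i - e k t 0 j.
  move=> k; rewrite /e /cen /D !mxE; ring.
have dd : dotv D D <= 4 * E t.
  rewrite /E mulr_sumr; apply: ler_sum => k _; rewrite Dk.
  have := sq_le_dotv (e k t) i; have := sq_le_dotv (e k t) j.
  set u1 := e k t 0 i; set u2 := e k t 0 j; nra.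
have Et : E t <= eps ^+ 2 / 4 by apply: le_trans (ler_norm _) Ht.
rewrite /enorm ger0_norm ?sqrtr_ge0 //.
have s2 := sqr_sqrtr (dotv_ge0 D); have s0 := sqrtr_ge0 (dotv D D).
set s := Num.sqrt (dotv D D) in s2 s0 *.
have : s ^+ 2 <= eps ^+ 2 by rewrite s2; lra.
nra.
Qed.
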